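(* Failure links and pops can be computed as follows. If $v\in\{r,r_\sharp\}$, then $f(v)=\mathrm{null}$ and $F(v)=[\,]$. Otherwise, let $u$ be the parent of $v$ and $c$ the edge label with $\delta(u,c)=v$; then $$(f(v),F(v)) = \begin{cases}(r_\sharp,\,[\chi_v]) & \text{if } \chi_v\in V,\\ \big(h(f(u),c),\; F(u)+H(f(u),c)\big) & \text{otherwise.}\end{cases}$$
   Context: Setting: WordPiece tokenization with vocabulary $V$, suffix indicator string $\sharp$ (e.g. ''##'', possibly empty). A trie is built from $V$ with root $r$ and node $r_\sharp$ representing $\sharp$; it may be augmented with nodes for $\sqcup$ and $\sharp\sqcup$, where $\sqcup$ is a whitespace character not in the vocabulary alphabet (not added to $V$). $\delta(u,c)$ is the child of $u$ along edge $c$, or null. $\chi_v$ is the string of node $v$; $\gamma_w$ is the node representing $w$, or null. Length of $w$: $|w|$ if $w$ does not start with $\sharp$, else $|w|-|\sharp|$. $p_w$: longest (by this length) non-empty prefix $w'\in V$, $w'\notin\{\varepsilon,\sharp\}$, of $w$, required to start with $\sharp$ if $w$ does; $p_w=\varepsilon$ if none, and $p_\sharp=\varepsilon$. $q_w:=\sharp w''$ where $w=p_w w''$. MinPop Matching: $(g(w),G(w)) := (\gamma_w,[\,])$ if $\gamma_w\neq\mathrm{null}$; else $(\mathrm{null},[\,])$ if $p_w=\varepsilon$; else $(g(q_w),[p_w]+G(q_w))$. One-step: $(h(u,c),H(u,c)) := (\mathrm{null},[\,])$ if $u=\mathrm{null}$, else $(g(\chi_u c),G(\chi_u c))$. Failure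 link and failure pops of node $v$, with $w=\chi_v$: $(f(v),F(v)) := (\mathrm{null},[\,])$ if $p_w=\varepsilon$, else $(g(q_w),\,[p_w]+G(q_w))$. *)

(* Defs.v *)
From mathcomp Require Import all_boot.
Set Implicit Arguments. Unset Strict Implicit. Unset Printing Implicit Defensive.

(* A trie node is
   identified with the string it represents (so chi_v = v); null is [None].
   Parameters:  V : vocabulary (finite list of strings),
                sh : suffix indicator string (possibly empty),
                aug : [None] (plain trie) or [Some sp] (trie augmented with the
                      nodes [sp] and sh ++ [sp], sp the whitespace char). *)

Section WordPiece.
Variable A : eqType.
Variables (V : seq (seq A)) (sh : seq A) (aug : option A).

Definition is_node (w : seq A) : bool :=
  has (prefix w) (sh :: V) ||
  (if aug is Some sp then (w == [:: sp]) || (w == sh ++ [:: sp]) else false).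

Definition gamma (w : seq A) : option (seq A) :=
  if is_node w then Some w else None.

Definition delta (u : seq A) (c : A) : option (seq A) :=
  if is_node (rcons u c) then Some (rcons u c) else None.

Definition starts_sh (w : seq A) : bool := prefix sh w.

Definition wlen (w : seq A) : nat :=
  if starts_sh w then size w - size sh else size w.

Definition cand (w w' : seq A) : bool :=
  [&& prefix w' w, w' \in V, w' != [::], w' != sh & starts_sh w ==> starts_sh w'].

(* p_w : the longest admissible prefix (length is monotone along prefixes
   among admissible candidates), or the empty string if none. *)
Definition pw (w : seq A) : seq A :=
  nth [::] [seq x <- [seq take k w | k <- rev (iota 1 (size w))] | cand w x] 0.

Definition qw (w : seq A) : seq A := sh ++ drop (size (pw w)) w.

(* MinPop matching (g(w), G(w)), by fuel; the fuel (size w).+1 always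
   suffices since wlen strictly decreases along recursive calls. *)
Fixpoint minpop_fuel (n : nat) (w : seq A) : option (seq A) * seq (seq A) :=
  match n with
  | 0 => (None, [::])
  | n'.+1 =>
    if gamma w is Some x then (Some x, [::])
    else if pw w == [::] then (None, [::])
    else let r := minpop_fuel n' (qw w) in (r.1, pw w :: r.2)
  end.

Definition minpop (w : seq A) := minpop_fuel (size w).+1 w.
Definition g (w : seq A) : option (seq A) := (minpop w).1.
Definition G (w : seq A) : seq (seq A) := (minpop w).2.

Definition h (u : option (seq A)) (c : A) : option (seq A) :=
  if u is Some x then g (rcons x c) else None.
Definition H (u : option (seq A)) (c : A) : seq (seq A) :=
  if u is Some x then G (rcons x c) else [::].

Definition f (v : seq A) : option (seq A) :=
  if pw v == [::] then None else g (qw v).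
Definition F (v : seq A) : seq (seq A) :=
  if pw v == [::] then [::] else pw v :: G (qw v).

End WordPiece.

(* Main.v *)
Require Import Defs.
From mathcomp Require Import all_boot.
From mathcomp Require Import zify.

Section L.
Variable A : eqType.
Variables (V : seq (seq A)) (sh : seq A) (aug : option A).

Lemma prefix_rconsE (s w : seq A) c :
  prefix s (rcons w c) -> prefix s w || (s == rcons w c).
Proof.
rewrite prefixE => /eqP E.
case: (leqP (size s) (size w)) => Hs.
  rewrite -cats1 takel_cat // in E; by rewrite prefixE E eqxx.
rewrite -E take_oversize ?eqxx ?orbT // size_rcons //.
Qed.

Lemma prefix_size (s t : seq A) : prefix s t -> size s <= size t.
Proof. by case/prefixP => u ->; rewrite size_cat leq_addr. Qed.

Lemma node_rcons (w : seq A) c : is_node V sh aug (rcons w c) -> is_node V sh aug w.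
Proof.
rewrite /is_node => /orP[/hasP[x Hx Hp]|Ha].
  apply/orP; left; apply/hasP; exists x => //.
  exact: prefix_trans (prefix_rcons w c) Hp.
case: aug Ha => // sp /orP[/eqP E|/eqP E].
  have : size w = 0 by have := congr1 size E; rewrite size_rcons => -[].
  move/eqP; rewrite size_eq0 => /eqP ->.
  by apply/orP; left; rewrite /= prefix0s.
have Hsz : size w = size sh.
  by have := congr1 size E; rewrite size_rcons size_cat /= addn1 => -[].
move: E; rewrite -cats1 => /eqP; rewrite eqseq_cat // => /andP[/eqP -> _].
by apply/orP; left; rewrite /= prefix_refl.
Qed.

Lemma inV_node (w : seq A) : w \in V -> is_node V sh aug w.
Proof.
by move=> Hw; rewrite /is_node; apply/orP; left; apply/hasP; exists w;
  rewrite ?inE ?Hw ?orbT ?prefix_refl.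
Qed.

Lemma sh_node : is_node V sh aug sh.
Proof. by rewrite /is_node /= prefix_refl. Qed.

Lemma starts_rcons (w : seq A) c : rcons w c != sh ->
  starts_sh sh (rcons w c) = starts_sh sh w.
Proof.
move=> Hne; rewrite /starts_sh.
apply/idP/idP.
  by move/prefix_rconsE => /orP[//|/eqP E]; move: Hne; rewrite E eqxx.
move=> H; exact: prefix_trans H (prefix_rcons w c).
Qed.

Lemma pw_rcons (w : seq A) c : rcons w c \notin V ->
  starts_sh sh (rcons w c) = starts_sh sh w ->
  pw V sh (rcons w c) = pw V sh w.
Proof.
move=> HV Hs; rewrite /pw size_rcons.
have -> : iota 1 (size w).+1 = iota 1 (size w) ++ [:: (size w).+1].
  by rewrite -[(size w).+1]addn1 iotaD add1n addnC.
rewrite rev_cat /=.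
have -> : cand V sh (rcons w c) (take (size w).+1 (rcons w c)) = false.
  by rewrite take_oversize ?size_rcons // /cand (negbTE HV) andbF.
rewrite /=.
have -> : [seq take k (rcons w c) | k <- rev (iota 1 (size w))] =
          [seq take k w | k <- rev (iota 1 (size w))].
  apply/eq_in_map => k; rewrite mem_rev mem_iota => /andP[_ Hk].
  by rewrite -cats1 takel_cat // -ltnS -add1n.
congr nth; apply: eq_in_filter => x /mapP[k _ ->].
rewrite /cand Hs prefix_take.
by rewrite (prefix_trans (prefix_take w k) (prefix_rcons w c)).
Qed.

Lemma pw_cand (w : seq A) : pw V sh w != [::] -> cand V sh w (pw V sh w).
Proof.
rewrite /pw; set s := filter _ _ => Hn.
have Hs : 0 < size s by move: Hn; case: s.
by have := mem_nth [::] Hs; rewrite mem_filter => /andP[].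
Qed.

Lemma wlen_le (w : seq A) : wlen sh w <= size w.
Proof. by rewrite /wlen; case: ifP => // _; rewrite leq_subr. Qed.

Lemma wlen_qw (w : seq A) : pw V sh w != [::] -> wlen sh (qw V sh w) < wlen sh w.
Proof.
move=> Hn; have := pw_cand _ Hn; rewrite /cand => /and5P[Hp _ Hne Hnsh Hst].
have Hsz := prefix_size _ _ Hp.
have Hp0 : 0 < size (pw V sh w) by move: Hne; case: (pw V sh w).
rewrite /wlen /qw /starts_sh prefix_prefix size_cat size_drop addKn.
move: Hst; rewrite /starts_sh; case: ifP => Hsw /= Hst.
  have Hlt : size sh < size (pw V sh w).
    have Hst' := Hst.
    rewrite ltn_neqAle (prefix_size _ _ Hst') andbT; apply/negP => /eqP Es.
    move: Hnsh; rewrite prefixE in Hst'; move: Hst' => /eqP Hst'.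
    by rewrite Es take_size in Hst'; rewrite Hst' eqxx.
  lia.
lia.
Qed.

Lemma fuel_eq n m (w : seq A) : wlen sh w < n -> wlen sh w < m ->
  minpop_fuel V sh aug n w = minpop_fuel V sh aug m w.
Proof.
elim: n m w => [|n IH] [|m] w //= Hn Hm.
case: (gamma _ _ _ w) => // .
case: eqP => // /eqP Hne.
have Hq := wlen_qw _ Hne.
rewrite (IH m) //; [exact: leq_trans Hq Hn | exact: leq_trans Hq Hm].
Qed.

Lemma minpop_eq (w : seq A) : minpop V sh aug w =
  if gamma V sh aug w is Some x then (Some x, [::])
  else if pw V sh w == [::] then (None, [::])
  else ((minpop V sh aug (qw V sh w)).1, pw V sh w :: (minpop V sh aug (qw V sh w)).2).
Proof.
rewrite {1}/minpop /=.
case: (gamma _ _ _ w) => //.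
case: eqP => // /eqP Hne.
rewrite /minpop (@fuel_eq (size w) (size (qw V sh w)).+1) //.
  exact: leq_trans (wlen_qw _ Hne) (wlen_le w).
by rewrite ltnS wlen_le.
Qed.

Lemma key (w : seq A) c :
  g V sh aug (rcons w c) = h V sh aug (g V sh aug w) c /\
  G V sh aug (rcons w c) = G V sh aug w ++ H V sh aug (g V sh aug w) c.
Proof.
move: {2}(wlen sh w).+1 (ltnSn (wlen sh w)) => n.
elim: n w => [//|n IH] w Hlt.
have [Hn|Hn] := boolP (is_node V sh aug w).
  by rewrite /g /G (minpop_eq w) /gamma Hn.
have Hn' : ~~ is_node V sh aug (rcons w c) by apply/negP => /node_rcons; apply/negP.
have HV : rcons w c \notin V by apply/negP => /(inV_node); apply/negP.
have Hsh : rcons w c != sh by apply/negP => /eqP E; move: Hn'; rewrite E sh_node.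
have Hpw := pw_rcons _ _ HV (starts_rcons _ _ Hsh).
rewrite /g /G (minpop_eq w) (minpop_eq (rcons w c)) /gamma (negbTE Hn) (negbTE Hn') Hpw.
case: eqP => [//|/eqP Hne] /=.
have Hq : qw V sh (rcons w c) = rcons (qw V sh w) c.
  rewrite /qw Hpw drop_rcons ?rcons_cat //.
  by have := pw_cand _ Hne; rewrite /cand => /and5P[/prefix_size + _ _ _ _].
rewrite Hq.
have [IH1 IH2] := IH (qw V sh w) (leq_trans (wlen_qw _ Hne) Hlt).
by move: IH1 IH2; rewrite /g /G => -> ->.
Qed.

End L.

Theorem lemma5 (A : eqType) (V : seq (seq A)) (sh : seq A) (aug : option A) :
  (* the whitespace character is not in the vocabulary alphabet *)
  (forall sp, aug = Some sp -> sp \notin sh /\ forall w, w \in V -> sp \notin w) ->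
  (* nodes r and r_sharp *)
  (forall v, v = [::] \/ v = sh ->
     f V sh aug v = None /\ F V sh aug v = [::]) /\
  (* other nodes v = delta(u, c) *)
  (forall (u v : seq A) (c : A),
     is_node V sh aug u -> delta V sh aug u c = Some v -> v != [::] -> v != sh ->
     (f V sh aug v, F V sh aug v) =
       if v \in V then (gamma V sh aug sh, [:: v])
       else (h V sh aug (f V sh aug u) c,
             F V sh aug u ++ H V sh aug (f V sh aug u) c)).
Proof.
move=> _; split.
  move=> v [->|->]; first by rewrite /f /F /pw.
  rewrite /f /F.
  have -> : pw V sh sh = [::].
    apply/eqP/negPn/negP => Hn; have := @pw_cand _ V sh sh Hn.
    rewrite /cand /starts_sh prefix_refl /= => /and5P[Hp _ _ Hnsh Hst].
    move/prefixP: Hst => [b Eb]; move/prefixP: Hp => [a Ea].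
    have : size b = 0.
      by have := congr1 size Ea; rewrite Eb -catA size_cat size_cat; lia.
    move/eqP; rewrite size_eq0 => /eqP Eb0; move: Hnsh; rewrite Eb Eb0 cats0 eqxx //.
  by rewrite eqxx.
move=> u v c _; rewrite /delta; case: ifP => // Hnode [<-] Hv0 Hvsh.
case: ifP => HV.
  have Hpw : pw V sh (rcons u c) = rcons u c.
    rewrite /pw size_rcons.
    have -> : iota 1 (size u).+1 = iota 1 (size u) ++ [:: (size u).+1].
      by rewrite -[(size u).+1]addn1 iotaD add1n addnC.
    rewrite rev_cat /= take_oversize ?size_rcons //.
    by rewrite /cand prefix_refl HV Hv0 Hvsh implybb.
  rewrite /f /F Hpw (negbTE Hv0) /qw Hpw drop_size cats0.
  rewrite /g /G /minpop /= /gamma sh_node //.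
have Hpw := @pw_rcons _ V sh u c (negbT HV) (@starts_rcons _ sh u c Hvsh).
rewrite /f /F Hpw.
case: eqP => [_|/eqP Hne] //=.
have Hq : qw V sh (rcons u c) = rcons (qw V sh u) c.
  rewrite /qw Hpw drop_rcons ?rcons_cat //.
  by have := @pw_cand _ V sh u Hne; rewrite /cand => /and5P[/prefix_size + _ _ _ _].
have [K1 K2] := @key _ V sh aug (qw V sh u) c.
by rewrite Hq K1 K2.
Qed.
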